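(* Let $S$ be a quasi-thin scheme on $X$ and $\mathbb F$ a field. Then $S$ is triply regular if and only if there do not exist $R_u,R_v,R_w,R_y,R_z\in S$ with $k_u=k_v=k_w=k_y=k_z=2$ and $p_{uv}^w=p_{wy}^z=|R_{u'}R_z|=1$.
   Context: Let $X$ be a nonempty finite set. A scheme of class $d$ on $X$ is a partition $S=\{R_0,\dots,R_d\}$ of $X\times X$ into nonempty sets such that $R_0=\{(b,b):b\in X\}$; for each $c$ there is $c'$ with $R_{c'}=\{(f,e):(e,f)\in R_c\}$; and for all $i,j,k$ the intersection number $p_{ij}^k=|\{\ell\in X:(m,\ell)\in R_i,(\ell,n)\in R_j\}|$ does not depend on $(m,n)\in R_k$. The valency is $k_a=p_{aa'}^0$; quasi-thin means all $k_a\le 2$; complex product $R_aR_b=\{R_c:p_{ab}^c>0\}$. For $y\in X$, $yR_a=\{z:(y,z)\in R_a\}$; $A_a\in M_X(\mathbb F)$ is the $(0,1)$ adjacency matrix of $R_a$ and $E_a^*(y)$ is the diagonal $(0,1)$-matrix with ones exactly at positions indexed by $yR_a$. $S$ is triply regular if for every $y\in X$ the $\mathbb F$-linear span of all products $E_i^*(y)A_jE_\ell^*(y)$ ($R_i,R_j,R_\ell\in S$) is a unital $\mathbb F$-subalgebra of $M_X(\mathbb F)$. *)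

(* Defs.v *)
From mathcomp Require Import all_boot all_order all_algebra.
Set Implicit Arguments. Unset Strict Implicit. Unset Printing Implicit Defensive.
Import GRing.Theory.
Local Open Scope ring_scope.

(* A relational structure on X with classes R_0,...,R_d is encoded by the
   function r : X -> X -> 'I_d.+1, where (x,y) \in R_c  <->  r x y = c. *)
Section Scheme.
Variables (X : finType) (d : nat) (r : X -> X -> 'I_d.+1).

Definition pcount (i j : 'I_d.+1) (m n : X) : nat :=
  #|[set l | (r m l == i) && (r l n == j)]|.

Definition is_scheme : Prop :=
  [/\ (forall c : 'I_d.+1, exists x y, r x y = c),
      (forall x y, (r x y == ord0) = (x == y)),
      (forall c : 'I_d.+1, exists c' : 'I_d.+1, forall x y, r x y = c <-> r y x = c') &
      (forall i j k : 'I_d.+1, forall m n m' n', r m n = k -> r m' n' = k ->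
          pcount i j m n = pcount i j m' n')].

Definition pnum (i j k : 'I_d.+1) : nat :=
  if [pick mn : X * X | r mn.1 mn.2 == k] is Some mn
  then pcount i j mn.1 mn.2 else 0.

Definition conv (c : 'I_d.+1) : 'I_d.+1 :=
  odflt c [pick c' : 'I_d.+1 | [forall x, forall y, (r x y == c) == (r y x == c')]].

Definition valency (a : 'I_d.+1) : nat := pnum a (conv a) ord0.

Definition quasi_thin : Prop := forall a : 'I_d.+1, (valency a <= 2)%N.

Definition cplx_prod (a b : 'I_d.+1) : {set 'I_d.+1} :=
  [set c | (0 < pnum a b c)%N].

(* Matrices in M_X(F), rows/columns indexed via enum_val : 'I_#|X| -> X. *)
Variable F : fieldType.

Definition adj (j : 'I_d.+1) : 'M[F]_#|X| :=
  \matrix_(a, b) ((r (enum_val a) (enum_val b) == j) : nat)%:R.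

Definition dual_idem (y : X) (i : 'I_d.+1) : 'M[F]_#|X| :=
  \matrix_(a, b) (((a == b) && (r y (enum_val a) == i)) : nat)%:R.

(* the F-linear span of all E_i^*(y) A_j E_l^*(y), as a row space of mxvec's *)
Definition terwilliger_span (y : X) : 'M[F]_(#|X| ^ 2) :=
  (\sum_(t : 'I_d.+1 * 'I_d.+1 * 'I_d.+1)
     <<mxvec (dual_idem y t.1.1 *m adj t.1.2 *m dual_idem y t.2)>>)%MS.

Definition triply_regular : Prop :=
  forall y : X,
    (mxvec (1%:M : 'M[F]_#|X|) <= terwilliger_span y)%MS /\
    (forall M N : 'M[F]_#|X|,
        (mxvec M <= terwilliger_span y)%MS ->
        (mxvec N <= terwilliger_span y)%MS ->
        (mxvec (M *m N) <= terwilliger_span y)%MS).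

End Scheme.

(* Main.v *)
Require Import Defs.
From mathcomp Require Import all_boot all_order all_algebra.
Set Implicit Arguments. Unset Strict Implicit. Unset Printing Implicit Defensive.

Lemma convP (X : finType) (d : nat) (r : X -> X -> 'I_d.+1) :
  is_scheme r -> forall c x y, (r x y == c) = (r y x == conv r c).
Proof.
case=> _ _ H3 _ c x y; rewrite /conv; case: pickP => [c' /forallP H|H].
  by have /forallP/(_ y)/eqP := H x.
have [c' Hc'] := H3 c; move: (H c') => /negbT/negP; case.
apply/forallP=> x'; apply/forallP=> y'; apply/eqP.
by apply/idP/idP => /eqP/Hc'/eqP.
Qed.

Lemma regP (X : finType) (d : nat) (r : X -> X -> 'I_d.+1) :
  is_scheme r -> forall i j m n m' n', r m n = r m' n' ->
  pcount r i j m n = pcount r i j m' n'.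
Proof. by case=> _ _ _ H4 i j m n m' n' E; apply: (H4 i j (r m n)). Qed.

Lemma pnumE (X : finType) (d : nat) (r : X -> X -> 'I_d.+1) :
  is_scheme r -> forall i j m n, pnum r i j (r m n) = pcount r i j m n.
Proof.
move=> Hs i j m n; rewrite /pnum; case: pickP => [[m0 n0] /= /eqP E|H].
  exact: regP.
by move: (H (m, n)); rewrite /= eqxx.
Qed.

Lemma r0 (X : finType) (d : nat) (r : X -> X -> 'I_d.+1) :
  is_scheme r -> forall x, r x x = ord0.
Proof. by case=> _ H2 _ _ x; apply/eqP; rewrite H2. Qed.

Lemma valE (X : finType) (d : nat) (r : X -> X -> 'I_d.+1) :
  is_scheme r -> forall c x, valency r c = #|[set e | r x e == c]|.
Proof.
move=> Hs c x; rewrite /valency -(r0 Hs x) pnumE //.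
apply: eq_card => e; rewrite !inE -(convP Hs).
by case: (r x e == c).
Qed.

Lemma out2 (X : finType) (d : nat) (r : X -> X -> 'I_d.+1) :
  is_scheme r -> quasi_thin r -> forall x c, #|[set e | r x e == c]| <= 2.
Proof. by move=> Hs Hq x c; rewrite -(valE Hs); apply: Hq. Qed.

Lemma inval (X : finType) (d : nat) (r : X -> X -> 'I_d.+1) :
  is_scheme r -> forall c q, #|[set e | r e q == c]| = valency r c.
Proof.
move=> Hs c q.
have Hin : forall q', #|[set e | r e q' == c]| = #|[set e | r e q == c]|.
  move=> q'.
  have E : forall q1, #|[set e | r e q1 == c]| = pcount r (conv r c) c q1 q1.
    move=> q1; apply: eq_card => e; rewrite !inE -(convP Hs).
    by case: (r e q1 == c).
  by rewrite !E; apply: regP => //; rewrite !(r0 Hs).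
have Hout : forall x, #|[set e | r x e == c]| = valency r c.
  by move=> x; rewrite (valE Hs c x).
have S : \sum_(x : X) #|[set e | r x e == c]| = \sum_(e : X) #|[set x | r x e == c]|.
  have C1 : forall (P : X -> X -> bool) x, #|[set e | P x e]| = \sum_(e : X) (P x e : nat).
    move=> P x; rewrite -sum1dep_card big_mkcond /=.
    by apply: eq_bigr => e _; case: (P x e).
  rewrite (eq_bigr _ (fun x _ => C1 (fun x e => r x e == c) x)).
  rewrite exchange_big /=; apply: eq_bigr => e _.
  by rewrite (C1 (fun e x => r x e == c)).
move: S; rewrite (eq_bigr _ (fun x _ => Hout x)) (eq_bigr _ (fun e _ => Hin e)).
rewrite !sum_nat_const => /eqP; rewrite eqn_pmul2l; first by move/eqP.
by apply/card_gt0P; exists q.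
Qed.

Lemma rconv (X : finType) (d : nat) (r : X -> X -> 'I_d.+1) :
  is_scheme r -> forall x y c, r x y = c -> r y x = conv r c.
Proof. by move=> Hs x y c h; apply/eqP; rewrite -(convP Hs) h. Qed.

Lemma card_ge2 (T : finType) (A : {set T}) u v :
  u \in A -> v \in A -> u != v -> 2 <= #|A|.
Proof.
move=> Hu Hv Huv; have E : #|[set u; v]| = 2 by rewrite cards2 Huv.
rewrite -E; apply: subset_leq_card.
by apply/subsetP => z; rewrite !inE => /orP[] /eqP ->.
Qed.

Lemma card_ge3 (T : finType) (A : {set T}) u v w :
  u \in A -> v \in A -> w \in A -> u != v -> u != w -> v != w -> 3 <= #|A|.
Proof.
move=> Hu Hv Hw Huv Huw Hvw.
have -> : 3 = #|[set u; v] :|: [set w]|.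
  by rewrite setUC cardsU1 cards2 Huv !inE negb_or eq_sym Huw /= eq_sym Hvw.
apply: subset_leq_card; apply/subsetP => z; rewrite !inE.
by case/orP=> [/orP[]|] /eqP->.
Qed.

Lemma sub2_eq (T : finType) (A B : {set T}) :
  A \subset B -> #|B| <= 2 -> 2 <= #|A| -> A = B.
Proof.
move=> sAB hB hA; apply/eqP; rewrite eqEcard sAB /=; exact: leq_trans hB hA.
Qed.

Lemma card_le1_eq (T : finType) (A : {set T}) u v :
  #|A| <= 1 -> u \in A -> v \in A -> u = v.
Proof.
move=> h hu hv; apply/eqP; apply/negPn/negP => huv.
by have := card_ge2 hu hv huv; rewrite leqNgt ltnS h.
Qed.

Definition combTR (X : finType) (d : nat) (r : X -> X -> 'I_d.+1) (x : X) :=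
  forall a b a' b' : X, r x a = r x a' -> r a b = r a' b' -> r x b = r x b' ->
  forall l j m : 'I_d.+1,
  #|[set e | [&& r x e == l, r a e == j & r e b == m]]| =
  #|[set e | [&& r x e == l, r a' e == j & r e b' == m]]|.

Definition config (X : finType) (d : nat) (r : X -> X -> 'I_d.+1) :=
  exists u v w y z : 'I_d.+1,
        valency r u = 2%N /\ valency r v = 2%N /\ valency r w = 2%N /\
        valency r y = 2%N /\ valency r z = 2%N /\
        pnum r u v w = 1%N /\ pnum r w y z = 1%N /\
        #|cplx_prod r (conv r u) z| = 1%N.

Lemma val2 (X : finType) (d : nat) (r : X -> X -> 'I_d.+1) :
  is_scheme r -> quasi_thin r -> forall x c u v,
  r x u = c -> r x v = c -> u != v -> valency r c = 2.
Proof.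
move=> Hs Hq x c u v hu hv huv; apply/eqP; rewrite eqn_leq Hq (valE Hs c x).
by apply: (card_ge2 (u := u) (v := v)) => //; rewrite inE; apply/eqP.
Qed.

Lemma core (X : finType) (d : nat) (r : X -> X -> 'I_d.+1) :
  is_scheme r -> quasi_thin r -> ~ config r -> forall x, combTR r x.
Proof.
move=> Hs Hq Hnc x a b a' b' Ha Hk Hn l j m.
set Ns := fun p q => [set e | [&& r x e == l, r p e == j & r e q == m]].
rewrite -/(Ns a b) -/(Ns a' b').
wlog Hlt : a b a' b' Ha Hk Hn / #|Ns a' b'| < #|Ns a b|.
  move=> W; case: (ltngtP #|Ns a' b'| #|Ns a b|) => // h.
    exact: W.
  by symmetry; apply: W.
exfalso; apply: Hnc.
set i := r x a; set k := r a b; set n := r x b.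
pose E := [set e | r x e == l].
pose A := fun p => [set e | (r x e == l) && (r p e == j)].
pose B := fun q => [set e | (r x e == l) && (r e q == m)].
pose C := fun p q => [set f | (r p f == j) && (r f q == m)].
pose O := fun p c => [set e | r p e == c].
have NAB : forall p q, Ns p q = A p :&: B q.
  move=> p q; apply/setP => e; rewrite !inE.
  by case: (r x e == l); case: (r p e == j).
have NEC : forall p q, Ns p q = E :&: C p q.
  by move=> p q; apply/setP => e; rewrite !inE.
have AE : forall p, A p \subset E.
  by move=> p; apply/subsetP => e; rewrite !inE => /andP[].
have BE : forall q, B q \subset E.
  by move=> q; apply/subsetP => e; rewrite !inE => /andP[].
have E2 : #|E| <= 2 by apply: out2.
have O2 : forall p c, #|O p c| <= 2 by move=> p c; apply: out2.
have regA : #|A a| = #|A a'|.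
  have H : forall p, #|A p| = pcount r l (conv r j) x p.
    move=> p; apply: eq_card => e; rewrite !inE (convP Hs j p e); done.
  by rewrite !H; apply: (regP Hs).
have regB : #|B b| = #|B b'| by apply: (regP Hs).
have regC : #|C a b| = #|C a' b'| by apply: (regP Hs).
have [e He] : exists e, e \in Ns a b.
  by apply/card_gt0P; apply: leq_ltn_trans Hlt.
have A1 : #|A a| <= 1.
  rewrite leqNgt; apply/negP => h.
  have EA : forall p, #|A p| = #|A a| -> A p = E.
    by move=> p hp; apply: sub2_eq => //; rewrite hp.
  move: Hlt; rewrite !NAB (EA a) // (EA a') -?regA //.
  rewrite (setIidPr (BE b)) (setIidPr (BE b')) regB ltnn //.
have B1 : #|B b| <= 1.
  rewrite leqNgt; apply/negP => h.
  have EB : forall q, #|B q| = #|B b| -> B q = E.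
    by move=> q hq; apply: sub2_eq => //; rewrite hq.
  move: Hlt; rewrite !NAB (EB b) // (EB b') -?regB //.
  rewrite (setIidPl (AE a)) (setIidPl (AE a')) regA ltnn //.
have C1 : #|C a b| <= 1.
  rewrite leqNgt; apply/negP => h.
  have EC : forall p q, #|C p q| = #|C a b| -> Ns p q = A p.
    move=> p q hpq; rewrite NEC.
    have -> : C p q = O p j.
      apply: sub2_eq; rewrite ?hpq //.
      by apply/subsetP => f; rewrite !inE => /andP[].
    by apply/setP => f; rewrite !inE.
  by move: Hlt; rewrite (EC a b) // (EC a' b') -?regC // regA ltnn.
have N0 : Ns a' b' = set0.
  apply: cards0_eq; apply/eqP; rewrite -leqn0 -ltnS.
  apply: (leq_trans Hlt); rewrite NAB; apply: leq_trans A1.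
  by apply: subset_leq_card; apply: subsetIl.
have HeA : e \in A a by move: He; rewrite NAB inE => /andP[].
have HeB : e \in B b by move: He; rewrite NAB inE => /andP[].
have HeC : e \in C a b by move: He; rewrite NEC inE => /andP[].
have HeE : e \in E by move: HeA; rewrite !inE => /andP[].
have [e1 He1] : exists e1, e1 \in A a'.
  by apply/card_gt0P; rewrite -regA; apply/card_gt0P; exists e.
have [e2 He2] : exists e2, e2 \in B b'.
  by apply/card_gt0P; rewrite -regB; apply/card_gt0P; exists e.
have [f Hf] : exists f, f \in C a' b'.
  by apply/card_gt0P; rewrite -regC; apply/card_gt0P; exists e.
have He1E : e1 \in E by apply: (subsetP (AE a')).
have He2E : e2 \in E by apply: (subsetP (BE b')).
have e12 : e1 != e2.
  apply/negP => /eqP h; subst e2.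
  have : e1 \in Ns a' b' by rewrite NAB inE He1 He2.
  by rewrite N0 inE.
have fE : f \notin E.
  apply/negP => h.
  have : f \in Ns a' b' by rewrite NEC inE h Hf.
  by rewrite N0 inE.
have rE : forall e0, e0 \in E -> r x e0 = l by move=> e0; rewrite inE => /eqP.
have vj : valency r j = 2.
  apply: (val2 Hs Hq (x := a') (u := e1) (v := f)).
  - by move: He1; rewrite inE => /andP[_ /eqP].
  - by move: Hf; rewrite inE => /andP[/eqP].
  - by apply/eqP => h; move: fE; rewrite -h He1E.
have vm : valency r m = 2.
  rewrite -(inval Hs m b'); apply/eqP; rewrite eqn_leq; apply/andP; split.
    by rewrite (inval Hs) Hq.
  apply: (card_ge2 (u := e2) (v := f)).
  - by move: He2; rewrite !inE => /andP[_ ->].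
  - by move: Hf; rewrite !inE => /andP[_ ->].
  - by apply/eqP => h; move: fE; rewrite -h He2E.
have vl : valency r l = 2.
  by apply: (val2 Hs Hq (x := x) (u := e1) (v := e2)) => //; apply: rE.
have [eo [HeoE Heo]] : exists eo, eo \in E /\ eo != e.
  case: (eqVneq e1 e) => h; last by exists e1.
  by exists e2; split => //; rewrite -h eq_sym.
pose D := fun e0 => [set p | (r x p == i) && (r p e0 == j)].
have regD : forall e0, e0 \in E -> #|D e0| = #|D e|.
  move=> e0 h0; apply: (regP Hs); by rewrite !rE.
have HaD : a \in D e by rewrite inE eqxx; move: HeA; rewrite inE => /andP[].
have AaE : forall e', e' \in A a -> e' = e.
  by move=> e' h'; apply: (card_le1_eq A1).
have D1 : #|D e| <= 1.
  rewrite leqNgt; apply/negP => h.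
  have DO : D eo = O x i.
    apply: sub2_eq => //; last by rewrite regD.
    by apply/subsetP => p; rewrite !inE => /andP[].
  have : a \in D eo by rewrite DO inE.
  rewrite inE => /andP[_ h2].
  have : eo \in A a by rewrite inE h2 andbT; move: HeoE; rewrite inE.
  by move/AaE => h3; move: Heo; rewrite h3 eqxx.
have [p Hp] : exists p, p \in D eo.
  by apply/card_gt0P; rewrite regD //; apply/card_gt0P; exists a.
have pa : p != a.
  apply/eqP => h; subst p; move: Hp; rewrite inE => /andP[_ h2].
  have : eo \in A a by rewrite inE h2 andbT; move: HeoE; rewrite inE.
  by move/AaE => h3; move: Heo; rewrite h3 eqxx.
have vi : valency r i = 2.
  apply: (val2 Hs Hq (x := x) (u := p) (v := a)) => //.
  by move: Hp; rewrite inE => /andP[/eqP].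
have pij : pnum r i j l = 1.
  rewrite -(rE e HeE) pnumE //; apply/eqP; rewrite eqn_leq D1 /=.
  by apply/card_gt0P; exists a.
pose G := fun e0 => [set q | (r x q == n) && (r e0 q == m)].
have regG : forall e0, e0 \in E -> #|G e0| = #|G e|.
  have H : forall e0, #|G e0| = pcount r m (conv r n) e0 x.
    move=> e0; apply: eq_card => q; rewrite !inE (convP Hs n x q) andbC; done.
  move=> e0 h0; rewrite !H; apply: (regP Hs).
  by rewrite (rconv Hs (rE e0 h0)) (rconv Hs (rE e HeE)).
have HbG : b \in G e by rewrite inE eqxx; move: HeB; rewrite inE => /andP[].
have BbE : forall e', e' \in B b -> e' = e.
  by move=> e' h'; apply: (card_le1_eq B1).
have G1 : #|G e| <= 1.
  rewrite leqNgt; apply/negP => h.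
  have GO : G eo = O x n.
    apply: sub2_eq => //; last by rewrite regG.
    by apply/subsetP => q; rewrite !inE => /andP[].
  have : b \in G eo by rewrite GO inE.
  rewrite inE => /andP[_ h2].
  have : eo \in B b by rewrite inE h2 andbT; move: HeoE; rewrite inE.
  by move/BbE => h3; move: Heo; rewrite h3 eqxx.
have [q Hq'] : exists q, q \in G eo.
  by apply/card_gt0P; rewrite regG //; apply/card_gt0P; exists b.
have qb : q != b.
  apply/eqP => h; subst q; move: Hq'; rewrite inE => /andP[_ h2].
  have : eo \in B b by rewrite inE h2 andbT; move: HeoE; rewrite inE.
  by move/BbE => h3; move: Heo; rewrite h3 eqxx.
have vn : valency r n = 2.
  apply: (val2 Hs Hq (x := x) (u := q) (v := b)) => //.
  by move: Hq'; rewrite inE => /andP[/eqP].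
have plm : pnum r l m n = 1.
  rewrite /n pnumE //; apply/eqP; rewrite eqn_leq B1 /=.
  by apply/card_gt0P; exists e.
pose K := fun q0 => [set p | (r x p == i) && (r p q0 == k)].
have [q0 [Hq0 K2]] : exists q0, r x q0 = n /\ 2 <= #|K q0|.
  case: (eqVneq a a') => haa.
    subst a'.
    have hbb : b != b'.
      by apply/eqP => h; subst b'; move: Hlt; rewrite ltnn.
    pose L := fun p0 => [set q1 | (r x q1 == n) && (r p0 q1 == k)].
    have regL : forall p0, r x p0 = i -> #|L p0| = #|L a|.
      have H : forall p0, #|L p0| = pcount r k (conv r n) p0 x.
        move=> p0; apply: eq_card => q1; rewrite !inE (convP Hs n x q1) andbC; done.
      move=> p0 h0; rewrite !H; apply: (regP Hs).
      by rewrite (rconv Hs h0) (rconv Hs (erefl : r x a = i)).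
    have L2 : 2 <= #|L a|.
      apply: (card_ge2 (u := b) (v := b')) => //; rewrite inE.
        by rewrite !eqxx.
      by rewrite -Hn -Hk !eqxx.
    have Hpi : r x p = i by move: Hp; rewrite inE => /andP[/eqP].
    have LO : L p = O x n.
      apply: sub2_eq => //; last by rewrite regL.
      by apply/subsetP => q1; rewrite !inE => /andP[].
    have : b \in L p by rewrite LO inE.
    rewrite inE => /andP[_ hpb].
    exists b; split => //; apply: (card_ge2 (u := a) (v := p)).
    - by rewrite inE !eqxx.
    - by rewrite inE Hpi hpb eqxx.
    - by rewrite eq_sym.
  case: (eqVneq b b') => hbb.
    subst b'; exists b; split => //.
    apply: (card_ge2 (u := a) (v := a')) => //; rewrite inE.
      by rewrite !eqxx.
    by rewrite -Ha -Hk !eqxx.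
  exfalso.
  have e1e : e1 != e.
    apply/eqP => h; subst e1.
    have : 2 <= #|D e|.
      apply: (card_ge2 (u := a) (v := a')) => //.
      by move: He1; rewrite !inE => /andP[_ ->]; rewrite -Ha eqxx.
    by rewrite leqNgt ltnS D1.
  have e2e : e2 != e.
    apply/eqP => h; subst e2.
    have : 2 <= #|G e|.
      apply: (card_ge2 (u := b) (v := b')) => //.
      by move: He2; rewrite !inE => /andP[_ ->]; rewrite -Hn eqxx.
    by rewrite leqNgt ltnS G1.
  have := card_ge3 HeE He1E He2E; rewrite eq_sym e1e eq_sym e2e e12.
  by move=> /(_ isT isT isT); rewrite leqNgt ltnS E2.
have cplx : cplx_prod r (conv r i) n = [set k].
  apply/setP => c; rewrite !inE; apply/idP/eqP.
    move=> Hc; case: (Hs) => H1 _ _ _.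
    have [p0 [q1 Hpq]] := H1 c.
    move: Hc; rewrite -Hpq pnumE // => /card_gt0P [x0]; rewrite inE.
    case/andP => hx0 hx0'.
    pose K' := [set p1 | (r x0 p1 == i) && (r p1 q1 == k)].
    have K'2 : 2 <= #|K'|.
      have -> : #|K'| = #|K q0| by apply: (regP Hs); rewrite Hq0; apply/eqP.
      done.
    have KO : K' = O x0 i.
      apply: sub2_eq => //.
      by apply/subsetP => p1; rewrite !inE => /andP[].
    have : p0 \in K' by rewrite KO inE (convP Hs).
    by rewrite inE => /andP[_ /eqP]; rewrite Hpq.
  move=> ->; rewrite /k pnumE //; apply/card_gt0P; exists x.
  by rewrite inE -(convP Hs) !eqxx.
exists i, j, l, m, n; do !split => //.
by rewrite cplx cards1.
Qed.

Import GRing.Theory.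
Local Open Scope ring_scope.

Lemma b2R_mul (F : fieldType) (b1 b2 : bool) :
  (b1 : nat)%:R * (b2 : nat)%:R = ((b1 && b2) : nat)%:R :> F.
Proof. by case: b1; case: b2; rewrite ?mul1r ?mul0r. Qed.

Lemma gen_entry (X : finType) (d : nat) (r : X -> X -> 'I_d.+1) (F : fieldType)
  (y : X) (i j l : 'I_d.+1) (p q : 'I_#|X|) :
  (dual_idem r F y i *m adj r F j *m dual_idem r F y l) p q =
  ([&& r y (enum_val p) == i, r (enum_val p) (enum_val q) == j &
       r y (enum_val q) == l] : nat)%:R.
Proof.
rewrite mxE (bigD1 q) //= big1 ?addr0; last first.
  by move=> k /negbTE nk; rewrite [dual_idem _ _ _ _ k q]mxE nk /= mulr0.
rewrite mxE (bigD1 p) //= big1 ?addr0; last first.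
  by move=> k /negbTE nk; rewrite [dual_idem _ _ _ _ p k]mxE eq_sym nk /= mul0r.
rewrite !mxE !eqxx /= !b2R_mul; congr (_ %:R).
by case: (r y (enum_val p) == i); case: (r (enum_val p) (enum_val q) == j).
Qed.

Definition typ (X : finType) (d : nat) (r : X -> X -> 'I_d.+1) (y : X) (p q : 'I_#|X|) :=
  (r y (enum_val p), r (enum_val p) (enum_val q), r y (enum_val q)).

Definition bc (X : finType) (d : nat) (r : X -> X -> 'I_d.+1) (F : fieldType)
  (y : X) (M : 'M[F]_#|X|) :=
  forall p q p' q', typ r y p q = typ r y p' q' -> M p q = M p' q'.

Lemma gen_bc (X : finType) (d : nat) (r : X -> X -> 'I_d.+1) (F : fieldType)
  (y : X) (i j l : 'I_d.+1) :
  bc r y (dual_idem r F y i *m adj r F j *m dual_idem r F y l).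
Proof. by move=> p q p' q'; rewrite !gen_entry /typ => [[-> -> ->]]. Qed.

Lemma span_bc (X : finType) (d : nat) (r : X -> X -> 'I_d.+1) (F : fieldType)
  (y : X) (M : 'M[F]_#|X|) :
  (mxvec M <= terwilliger_span r F y)%MS -> bc r y M.
Proof.
move=> HM p q p' q' Ht.
pose P : 'cV[F]_(#|X| * #|X|) :=
  delta_mx (mxvec_index p q) 0 - delta_mx (mxvec_index p' q') 0.
have key : forall N : 'M[F]_#|X|, (mxvec N *m P) 0 0 = N p q - N p' q'.
  by move=> N; rewrite mulmxBr -!colE !mxE !mxvecE.
have Hsub : (terwilliger_span r F y <= kermx P)%MS.
  apply/sumsmx_subP => t _; rewrite genmxE sub_kermx; apply/eqP.
  apply/matrixP => i0 j0; rewrite !ord1 key [RHS]mxE.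
  by rewrite (@gen_bc _ _ r F y _ _ _ _ _ _ _ Ht) subrr.
have := submx_trans HM Hsub; rewrite sub_kermx => /eqP/matrixP/(_ 0 0).
by rewrite key mxE => /eqP; rewrite subr_eq0 => /eqP.
Qed.

Definition cf (X : finType) (d : nat) (r : X -> X -> 'I_d.+1) (F : fieldType)
  (y : X) (M : 'M[F]_#|X|) (t : 'I_d.+1 * 'I_d.+1 * 'I_d.+1) : F :=
  if [pick pq : 'I_#|X| * 'I_#|X| | typ r y pq.1 pq.2 == t] is Some pq
  then M pq.1 pq.2 else 0.

Lemma cfE (X : finType) (d : nat) (r : X -> X -> 'I_d.+1) (F : fieldType)
  (y : X) (M : 'M[F]_#|X|) : bc r y M -> forall p q, M p q = cf r y M (typ r y p q).
Proof.
move=> H p q; rewrite /cf; case: pickP => [[p' q'] /= /eqP h|h].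
  by apply: H; rewrite h.
by have := h (p, q); rewrite /= eqxx.
Qed.

Lemma bc_span (X : finType) (d : nat) (r : X -> X -> 'I_d.+1) (F : fieldType)
  (y : X) (M : 'M[F]_#|X|) : bc r y M -> (mxvec M <= terwilliger_span r F y)%MS.
Proof.
move=> H.
have EM : M = \sum_(t : 'I_d.+1 * 'I_d.+1 * 'I_d.+1)
   cf r y M t *: (dual_idem r F y t.1.1 *m adj r F t.1.2 *m dual_idem r F y t.2).
  apply/matrixP => p q; rewrite summxE (bigD1 (typ r y p q)) //= big1 ?addr0.
    by rewrite mxE gen_entry /typ /= !eqxx /= mulr1 -(cfE H).
  move=> [[i j] l] /= nt; rewrite mxE gen_entry.
  case: andP => [[/eqP hi /andP[/eqP hj /eqP hl]]|]; last by rewrite mulr0.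
  by move: nt; rewrite /typ hi hj hl eqxx.
rewrite EM linear_sum; apply: summx_sub => t _; rewrite linearZ.
apply: scalemx_sub; apply: (sumsmx_sup t) => //; rewrite genmxE; exact: submx_refl.
Qed.

Lemma sum_group (I T : finType) (R : ringType) (g : I -> T) (G : T -> R) :
  \sum_(k : I) G (g k) = \sum_(t : T) G t *+ #|[set k | g k == t]|.
Proof.
rewrite (partition_big g xpredT) //=; apply: eq_bigr => t _.
rewrite (eq_bigr (fun=> G t)); last by move=> k /eqP ->.
by rewrite sumr_const; congr (_ *+ _); apply: eq_card => k; rewrite inE.
Qed.

Lemma card_ev (X : finType) (P : pred X) :
  #|[set k : 'I_#|X| | P (enum_val k)]| = #|[set e | P e]|.
Proof.
rewrite -(card_imset _ enum_val_inj); apply: eq_card => e.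
rewrite inE; apply/imsetP/idP => [[k]|he].
  by rewrite inE => hk ->.
by exists (enum_rank e); rewrite ?inE enum_rankK.
Qed.

Lemma mul_entry (X : finType) (d : nat) (r : X -> X -> 'I_d.+1) (F : fieldType)
  (y : X) (M N : 'M[F]_#|X|) : bc r y M -> bc r y N -> forall p q,
  (M *m N) p q = \sum_(t : 'I_d.+1 * 'I_d.+1 * 'I_d.+1)
     (cf r y M (r y (enum_val p), t.1.2, t.1.1) * cf r y N (t.1.1, t.2, r y (enum_val q)))
     *+ #|[set e | [&& r y e == t.1.1, r (enum_val p) e == t.1.2 & r e (enum_val q) == t.2]]|.
Proof.
move=> HM HN p q; rewrite mxE.
pose G := fun t : 'I_d.+1 * 'I_d.+1 * 'I_d.+1 =>
     cf r y M (r y (enum_val p), t.1.2, t.1.1) * cf r y N (t.1.1, t.2, r y (enum_val q)).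
pose g := fun k : 'I_#|X| =>
  (r y (enum_val k), r (enum_val p) (enum_val k), r (enum_val k) (enum_val q)).
transitivity (\sum_k G (g k)).
  by apply: eq_bigr => k _; rewrite (cfE HM) (cfE HN).
rewrite sum_group; apply: eq_bigr => t _; congr (_ *+ _).
rewrite -(card_ev (fun e => [&& r y e == t.1.1, r (enum_val p) e == t.1.2 & r e (enum_val q) == t.2])).
apply: eq_card => k; rewrite !inE /g; case: t => [[l j] m] /=.
by rewrite !xpair_eqE andbA.
Qed.

Lemma bc_mul (X : finType) (d : nat) (r : X -> X -> 'I_d.+1) (F : fieldType)
  (y : X) (M N : 'M[F]_#|X|) : combTR r y -> bc r y M -> bc r y N -> bc r y (M *m N).
Proof.
move=> Hc HM HN p q p' q' [h1 h2 h3]; rewrite (mul_entry HM HN) (mul_entry HM HN).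
apply: eq_bigr => t _; rewrite h1 h3; congr (_ *+ _).
exact: Hc.
Qed.

Lemma prod_entry (X : finType) (d : nat) (r : X -> X -> 'I_d.+1) (F : fieldType)
  (y : X) (i j l m n : 'I_d.+1) (p q : 'I_#|X|) :
  ((dual_idem r F y i *m adj r F j *m dual_idem r F y l) *m
   (dual_idem r F y l *m adj r F m *m dual_idem r F y n)) p q =
  (#|[set e | [&& r y (enum_val p) == i, r y (enum_val q) == n, r y e == l,
                 r (enum_val p) e == j & r e (enum_val q) == m]]|)%:R.
Proof.
have mE : forall A B : 'M[F]_#|X|, (A *m B) p q = \sum_k A p k * B k q.
  by move=> A B; rewrite mxE.
rewrite mE; under eq_bigr => k _ do rewrite !gen_entry b2R_mul.
rewrite -natr_sum; congr (_ %:R).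
rewrite -(card_ev (fun e => [&& r y (enum_val p) == i, r y (enum_val q) == n, r y e == l,
                 r (enum_val p) e == j & r e (enum_val q) == m])).
rewrite -sum1dep_card [RHS]big_mkcond /=; apply: eq_bigr => k _.
case: (r y (enum_val p) == i); case: (r y (enum_val q) == n);
  case: (r y (enum_val k) == l); case: (r (enum_val p) (enum_val k) == j);
  by case: (r (enum_val k) (enum_val q) == m).
Qed.

Lemma gen_in (X : finType) (d : nat) (r : X -> X -> 'I_d.+1) (F : fieldType)
  (y : X) (i j l : 'I_d.+1) :
  (mxvec (dual_idem r F y i *m adj r F j *m dual_idem r F y l) <= terwilliger_span r F y)%MS.
Proof. by apply: (sumsmx_sup (i, j, l)) => //; rewrite genmxE. Qed.

Theorem corollary4p12 (X : finType) (d : nat) (r : X -> X -> 'I_d.+1)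
    (F : fieldType) :
  is_scheme r -> quasi_thin r ->
  (triply_regular r F <->
   ~ (exists u v w y z : 'I_d.+1,
        valency r u = 2%N /\ valency r v = 2%N /\ valency r w = 2%N /\
        valency r y = 2%N /\ valency r z = 2%N /\
        pnum r u v w = 1%N /\ pnum r w y z = 1%N /\
        #|cplx_prod r (conv r u) z| = 1%N)).
Proof.
move=> Hs Hq; split.
  move=> HT [u [v [w [yy [z [hu [hv [hw [hy [hz [puvw [pwyz hc]]]]]]]]]]]].
  case: (Hs) => H1 H2 _ _.
  have [x [b hxb]] := H1 z.
  have : #|[set e | r x e == u]| == 2 by rewrite -(valE Hs) hu.
  case/cards2P => [a1 [a2 [a12 Hset]]].
  have [e0 He0] : exists e0, [set e | (r x e == w) && (r e b == yy)] = [set e0].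
    by apply/cards1P; rewrite -hxb pnumE // in pwyz; rewrite -pwyz.
  have : e0 \in [set e | (r x e == w) && (r e b == yy)] by rewrite He0 set11.
  rewrite inE => /andP[/eqP hxe0 he0b].
  have [as1 Has] : exists as1, [set p | (r x p == u) && (r p e0 == v)] = [set as1].
    by apply/cards1P; rewrite -hxe0 pnumE // in puvw; rewrite -puvw.
  have : as1 \in [set p | (r x p == u) && (r p e0 == v)] by rewrite Has set11.
  rewrite inE => /andP[hxas has].
  have [ao [hxao hao]] : exists ao, r x ao == u /\ ao != as1.
    have : as1 \in [set e | r x e == u] by rewrite inE.
    rewrite Hset !inE => /orP[] /eqP h.
      exists a2; split; last by rewrite h eq_sym.
      have : a2 \in [set e | r x e == u] by rewrite Hset !inE eqxx orbT.
      by rewrite inE.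
    exists a1; split; last by rewrite h.
    have : a1 \in [set e | r x e == u] by rewrite Hset !inE eqxx.
    by rewrite inE.
  have inC : forall p, r x p == u -> r p b \in cplx_prod r (conv r u) z.
    move=> p hp; rewrite inE pnumE //; apply/card_gt0P; exists x.
    by rewrite inE -(convP Hs) hp -hxb eqxx.
  have hab : r as1 b = r ao b.
    have /eqP/cards1P [c0 Hc0] := hc.
    move: (inC _ hxas) (inC _ hxao); rewrite Hc0 !inE => /eqP -> /eqP -> //.
  have [_ Hmul] := HT x.
  have Hbc := span_bc (Hmul _ _ (gen_in r F x u v w) (gen_in r F x w yy z)).
  have := Hbc (enum_rank as1) (enum_rank b) (enum_rank ao) (enum_rank b).
  rewrite /typ !enum_rankK (eqP hxas) (eqP hxao) hab => /(_ erefl).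
  rewrite !prod_entry !enum_rankK hxas hxao -hxb eqxx /=.
  have -> : [set e | [&& r x e == w, r as1 e == v & r e b == yy]] = [set e0].
    apply/setP => e; rewrite inE; apply/idP/idP.
      case/and3P => h1 h2 h3.
      by rewrite -He0 inE h1 h3.
    by rewrite inE => /eqP ->; rewrite hxe0 eqxx has he0b.
  have -> : [set e | [&& r x e == w, r ao e == v & r e b == yy]] = set0.
    apply/setP => e; rewrite !inE; apply/negP; case/and3P => h1 h2 h3.
    have : e \in [set e0] by rewrite -He0 inE h1 h3.
    rewrite inE => /eqP he; subst e.
    have : ao \in [set as1] by rewrite -Has inE hxao h2.
    by rewrite inE (negbTE hao).
  by rewrite cards1 cards0 => /eqP; rewrite oner_eq0.
move=> Hnc y; have Hc : combTR r y := @core X d r Hs Hq Hnc y; split.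
  apply: bc_span => p q p' q' [_ h _]; rewrite !mxE.
  case: (Hs) => _ H2 _ _.
  by rewrite -(inj_eq enum_val_inj) -[p' == q'](inj_eq enum_val_inj) -!H2 h.
move=> M N hM hN; apply: bc_span; apply: bc_mul => //; exact: span_bc.
Qed.
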